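(* Let $G$ be a group with a finite generating set $S$, equipped with the word metric $d_S$, and suppose $G$ acts transitively by isometries on a metric space $M$. Fix a basepoint $x_0 \in M$. Suppose that $M$ has asymptotic property C and that there is an integer $n \ge 0$ such that for every $R > 0$, the quasi-stabilizer $W_R(x_0)$ (with the metric restricted from $d_S$) has asymptotic dimension at most $n$. Then $G$ (with the metric $d_S$) has asymptotic property C.
   Context: The word metric on $G$ with respect to the finite generating set $S$ is $d_S(g,h) = $ the length of a shortest word in $S \cup S^{-1}$ representing $g^{-1}h$; it is left-invariant. A family $\mathcal{F}$ of subsets of a metric space $X$ is uniformly bounded if there is $R>0$ with $\mathrm{diam}(F) < R$ for all $F \in \mathcal{F}$; for $r>0$, $\mathcal{F}$ is $r$-disjoint if $d(F_1,F_2) > r$ for all distinct $F_1, F_2 \in \mathcal{F}$. A metric space $X$ has asymptotic dimension at most $n$ if for every $r>0$ there exist $n+1$ uniformly bounded, $r$-disjoint families $\mathcal{F}_0,\dots,\mathcal{F}_n$ of subsets of $X$ whose union covers $X$. A metric space $X$ has asymptotic property C if for every sequence of real numbers $0<r_0<r_1<\cdots$ there exist $m \in \mathbb{N}$ and uniformly bounded families $\mathcal{F}_0,\dots,\mathcal{F}_m$ of subsets of $X$ such that each $\mathcal{F}_i$ is $r_i$-disjoint and $\bigcup_{i=0}^m \mathcal{F}_i$ covers $X$. For a group $G$ acting by isometries on $M$, $x \in M$ and $R>0$, the $R$-quasi-stabilizer of $x$ is $W_R(x) = \{ g \in G \mid d_M(x, gx) \le R\}$. *)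

(* Defs.v *)
From Stdlib Require Import Reals List.
Open Scope R_scope.

Section MetricNotions.
Context {X : Type} (d : X -> X -> R).

Definition is_metric : Prop :=
  (forall x y, 0 <= d x y) /\
  (forall x y, d x y = 0 <-> x = y) /\
  (forall x y, d x y = d y x) /\
  (forall x y z, d x z <= d x y + d y z).

Definition family := (X -> Prop) -> Prop.

Definition diam_lt (A : X -> Prop) (Rb : R) : Prop :=
  exists R', R' < Rb /\ forall x y, A x -> A y -> d x y <= R'.

Definition uniformly_bounded (F : family) : Prop :=
  exists Rb, 0 < Rb /\ forall A, F A -> diam_lt A Rb.

Definition set_dist_gt (A B : X -> Prop) (r : R) : Prop :=
  exists r', r < r' /\ forall x y, A x -> B y -> r' <= d x y.

Definition r_disjoint (r : R) (F : family) : Prop :=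
  forall A B, F A -> F B -> A <> B -> set_dist_gt A B r.

Definition covers_upto (m : nat) (F : nat -> family) : Prop :=
  forall x, exists i A, (i <= m)%nat /\ F i A /\ A x.

Definition asdim_le (n : nat) : Prop :=
  forall r, 0 < r ->
    exists F : nat -> family,
      (forall i, (i <= n)%nat -> uniformly_bounded (F i) /\ r_disjoint r (F i)) /\
      covers_upto n F.

Definition asymptotic_property_C : Prop :=
  forall r : nat -> R, 0 < r 0%nat -> (forall i, r i < r (S i)) ->
    exists (m : nat) (F : nat -> family),
      (forall i, (i <= m)%nat -> uniformly_bounded (F i) /\ r_disjoint (r i) (F i)) /\
      covers_upto m F.

End MetricNotions.

Section GroupNotions.
Context {G : Type} (mul : G -> G -> G) (inv : G -> G) (e : G).

Definition is_group : Prop :=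
  (forall a b c, mul a (mul b c) = mul (mul a b) c) /\
  (forall a, mul e a = a) /\ (forall a, mul a e = a) /\
  (forall a, mul (inv a) a = e) /\ (forall a, mul a (inv a) = e).

(* a letter (s, false) stands for s, (s, true) for s^{-1} *)
Definition letter_val (l : G * bool) : G :=
  if snd l then inv (fst l) else fst l.

Definition word_in (S : list G) (w : list (G * bool)) : Prop :=
  forall l, In l w -> In (fst l) S.

Definition word_prod (w : list (G * bool)) : G :=
  fold_right (fun l acc => mul (letter_val l) acc) e w.

Definition generates (S : list G) : Prop :=
  forall g, exists w, word_in S w /\ word_prod w = g.

Definition is_word_metric (S : list G) (dS : G -> G -> R) : Prop :=
  forall g h,
    (exists w, word_in S w /\ word_prod w = mul (inv g) h /\ dS g h = INR (length w)) /\
    (forall w, word_in S w -> word_prod w = mul (inv g) h -> dS g h <= INR (length w)).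

Context {M : Type} (act : G -> M -> M) (dM : M -> M -> R).

Definition is_isometric_action : Prop :=
  (forall x, act e x = x) /\
  (forall g h x, act (mul g h) x = act g (act h x)) /\
  (forall g x y, dM (act g x) (act g y) = dM x y).

Definition transitive_action : Prop := forall x y, exists g, act g x = y.

Definition quasi_stab (Rr : R) (x : M) (g : G) : Prop := dM x (act g x) <= Rr.

End GroupNotions.

Definition restrict_metric {X : Type} (P : X -> Prop) (d : X -> X -> R)
  : {x | P x} -> {x | P x} -> R :=
  fun a b => d (proj1_sig a) (proj1_sig b).

(* Main.v *)
Require Import Defs.
From Stdlib Require Import Reals List Lra Lia Arith Classical ClassicalEpsilon.
Open Scope R_scope.

Lemma incr_lt (r : nat -> R) : (forall i, r i < r (S i)) -> forall a b, (a < b)%nat -> r a < r b.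
Proof. intros H a b Hab. induction Hab. apply H. specialize (H m). lra. Qed.

Lemma incr_le r : (forall i, r i < r (S i)) -> forall a b, (a <= b)%nat -> r a <= r b.
Proof. intros H a b Hab. destruct (Nat.eq_dec a b). subst; lra. left; apply incr_lt; auto; lia. Qed.

Lemma grp_inv_mul {G} (mul : G -> G -> G) inv e : is_group mul inv e ->
  forall a x y, mul (inv (mul a x)) (mul a y) = mul (inv x) y.
Proof.
  intros (Ha & Hl & Hr & Hil & Hir) a x y.
  assert (E1: mul (mul a x) (mul (inv x) (inv a)) = e).
  { rewrite Ha, <- (Ha a x (inv x)), Hir, Hr, Hir. reflexivity. }
  assert (Hinv: inv (mul a x) = mul (inv x) (inv a)).
  { transitivity (mul (mul (inv (mul a x)) (mul a x)) (mul (inv x) (inv a))).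
    - rewrite <- Ha, E1, Hr; reflexivity.
    - rewrite Hil, Hl; reflexivity. }
  rewrite Hinv, <- Ha, (Ha (inv a) a y), Hil, Hl. reflexivity.
Qed.

Lemma dS_linv {G} (mul : G -> G -> G) inv e S dS : is_group mul inv e ->
  is_word_metric mul inv e S dS -> forall a x y, dS (mul a x) (mul a y) = dS x y.
Proof.
  intros Hg Hw a x y.
  destruct (Hw (mul a x) (mul a y)) as [[w1 [Hw1 [Hp1 Hl1]]] Hm1].
  destruct (Hw x y) as [[w2 [Hw2 [Hp2 Hl2]]] Hm2].
  rewrite (grp_inv_mul mul inv e Hg) in Hp1, Hm1.
  apply Rle_antisym.
  - rewrite Hl2; apply Hm1; auto.
  - rewrite Hl1; apply Hm2; auto.
Qed.

Definition sumS {G M} (inv : G -> G) (act : G -> M -> M) (dM : M -> M -> R) x0 (S : list G) : R :=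
  fold_right (fun s acc => dM x0 (act s x0) + dM x0 (act (inv s) x0) + acc) 0 S.

Lemma sumS_nonneg {G M} inv act (dM : M -> M -> R) x0 (S : list G) :
  is_metric dM -> 0 <= sumS inv act dM x0 S.
Proof.
  intros [Hnn _]. induction S as [|a S' IH]; simpl. lra.
  pose proof (Hnn x0 (act a x0)); pose proof (Hnn x0 (act (inv a) x0)); lra.
Qed.

Lemma sumS_bound {G M} inv act (dM : M -> M -> R) x0 (S : list G) :
  is_metric dM -> forall s, In s S ->
   dM x0 (act s x0) <= sumS inv act dM x0 S /\ dM x0 (act (inv s) x0) <= sumS inv act dM x0 S.
Proof.
  intros Hm s. pose proof Hm as [Hnn _].
  induction S as [|a S' IH]; simpl; [tauto|]. intros [->|Hin].
  - pose proof (Hnn x0 (act (inv s) x0)); pose proof (Hnn x0 (act s x0));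
    pose proof (sumS_nonneg inv act dM x0 S' Hm). lra.
  - destruct (IH Hin). pose proof (Hnn x0 (act (inv a) x0)); pose proof (Hnn x0 (act a x0)). lra.
Qed.

Lemma word_bound {G M} (mul : G -> G -> G) inv e (act : G -> M -> M) dM x0 S :
  is_metric dM -> is_isometric_action mul e act dM ->
  forall w, word_in S w ->
   dM x0 (act (word_prod mul inv e w) x0) <= (1 + sumS inv act dM x0 S) * INR (length w).
Proof.
  intros Hm Ha. pose proof (sumS_nonneg inv act dM x0 S Hm) as Hs.
  destruct Ha as [He [Hc Hi]]. pose proof Hm as [Hnn [Hz [Hsym Htri]]].
  induction w as [|[s b] w IH]; intros Hw; simpl.
  - rewrite He. rewrite (proj2 (Hz x0 x0) eq_refl). lra.
  - rewrite Hc.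
    assert (Hlv : dM x0 (act (letter_val inv (s, b)) x0) <= sumS inv act dM x0 S).
    { assert (Hin : In s S) by (apply (Hw (s, b)); left; reflexivity).
      destruct (sumS_bound inv act dM x0 S Hm s Hin). unfold letter_val; destruct b; simpl; auto. }
    pose proof (Htri x0 (act (letter_val inv (s, b)) x0)
                  (act (letter_val inv (s, b)) (act (word_prod mul inv e w) x0))) as Ht.
    rewrite Hi in Ht.
    assert (IH' := IH (fun l' Hl' => Hw l' (in_cons _ _ _ Hl'))).
    replace (match length w with | 0%nat => 1 | Datatypes.S _ => INR (length w) + 1 end)
      with (INR (length w) + 1) by (destruct (length w); simpl; lra).
    simpl in Hlv, Ht |- *. nra.
Qed.

Lemma iso_shift {G M} (mul : G -> G -> G) inv e (act : G -> M -> M) dM x0 :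
  is_group mul inv e -> is_isometric_action mul e act dM ->
  forall g h, dM (act g x0) (act h x0) = dM x0 (act (mul (inv g) h) x0).
Proof.
  intros (Ha & Hl & Hr & Hil & Hir) (He & Hc & Hi) g h.
  rewrite Hc, <- (Hi (inv g) (act g x0)), <- (Hc (inv g) g), Hil, He. reflexivity.
Qed.

Lemma fin_max (P : nat -> R -> Prop) (Pmono : forall j b b', b <= b' -> P j b -> P j b') :
  forall m, (forall j, (j <= m)%nat -> exists b, 0 < b /\ P j b) ->
    exists D, 0 < D /\ forall j, (j <= m)%nat -> P j D.
Proof.
  induction m; intros H.
  - destruct (H 0%nat (le_n 0)) as [b [Hb HP]]. exists b; split; auto.
    intros j Hj. replace j with 0%nat by lia. auto.
  - destruct IHm as [D [HD HPD]]. { intros j Hj; apply H; lia. }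
    destruct (H (S m) (le_n _)) as [b [Hb HP]].
    exists (Rmax D b). split. { apply Rlt_le_trans with D; auto; apply Rmax_l. }
    intros j Hj. destruct (Nat.eq_dec j (S m)).
    + subst. apply Pmono with b; auto; apply Rmax_r.
    + apply Pmono with D; [apply Rmax_l|]. apply HPD; lia.
Qed.

Theorem proposition1
  (G : Type) (mul : G -> G -> G) (inv : G -> G) (e : G)
  (S : list G) (dS : G -> G -> R)
  (M : Type) (dM : M -> M -> R) (act : G -> M -> M) (x0 : M) (n : nat) :
  is_group mul inv e ->
  generates mul inv e S ->
  is_word_metric mul inv e S dS ->
  is_metric dM ->
  is_isometric_action mul e act dM ->
  transitive_action act ->
  asymptotic_property_C dM ->
  (forall Rr, 0 < Rr ->
     asdim_le (restrict_metric (quasi_stab act dM Rr x0) dS) n) ->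
  asymptotic_property_C dS.
Proof.
  intros Hg Hgen Hw Hm Ha Htr HC HW.
  set (L := 1 + sumS inv act dM x0 S).
  assert (HL : 0 < L) by (unfold L; pose proof (sumS_nonneg inv act dM x0 S Hm); lra).
  assert (Hlip : forall g h, dM (act g x0) (act h x0) <= L * dS g h).
  { intros g h. destruct (Hw g h) as [[w [Hwin [Hp Hl]]] _].
    rewrite Hl, (iso_shift mul inv e act dM x0 Hg Ha), <- Hp.
    apply word_bound; auto. }
  intros r Hr0 Hrinc.
  set (s := fun j => L * r ((n+1)*j + n)%nat).
  assert (Hrpos : forall i, 0 < r i).
  { intros i; destruct i; auto. apply Rlt_trans with (r 0%nat); auto; apply incr_lt; auto; lia. }
  destruct (HC s) as [m [FY [HFY HFYc]]].
  { unfold s. apply Rmult_lt_0_compat; auto. }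
  { intros j; unfold s. apply Rmult_lt_compat_l; auto. apply incr_lt; auto; lia. }
  destruct (fin_max (fun j b => forall U, FY j U -> diam_lt dM U b)) with m as [D [HD HDU]].
  { intros j b b' Hbb HP U HU. destruct (HP U HU) as [R' [HR' HR'']]. exists R'; split; auto; lra. }
  { intros j Hj. destruct (HFY j Hj) as [[b [Hb HbU]] _]. exists b; auto. }
  set (rho := r ((n+1)*m + n)%nat).
  destruct (HW D HD rho (Hrpos _)) as [VF [HVF HVFc]].
  set (gU := fun U : M -> Prop => epsilon (inhabits e)
        (fun g => forall h, U (act h x0) -> quasi_stab act dM D x0 (mul (inv g) h))).
  assert (HgU : forall j U, (j <= m)%nat -> FY j U -> forall h, U (act h x0) ->
             quasi_stab act dM D x0 (mul (inv (gU U)) h)).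
  { intros j U Hj HU. unfold gU. apply epsilon_spec.
    destruct (classic (exists h0, U (act h0 x0))) as [[h0 Hh0]|Hno].
    - exists h0. intros h Hh. unfold quasi_stab.
      destruct (HDU j Hj U HU) as [R' [HR' HR'']].
      specialize (HR'' _ _ Hh0 Hh).
      rewrite (iso_shift mul inv e act dM x0 Hg Ha) in HR''. lra.
    - exists e. intros h Hh. exfalso; apply Hno; eauto. }
  pose (Aset := fun (U : M -> Prop) (V : {g | quasi_stab act dM D x0 g} -> Prop) (x : G) =>
     U (act x x0) /\ exists p : {g | quasi_stab act dM D x0 g},
        proj1_sig p = mul (inv (gU U)) x /\ V p).
  exists ((n+1)*m + n)%nat, (fun i (A : G -> Prop) => exists U V,
     FY (i / (n+1))%nat U /\ VF (i mod (n+1))%nat V /\ A = Aset U V).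
  assert (Hn1 : (n+1 <> 0)%nat) by lia.
  split.
  - intros i Hi.
    pose proof (Nat.div_mod i (n+1) Hn1) as Hdm.
    pose proof (Nat.mod_upper_bound i (n+1) Hn1) as Hmb.
    assert (Hj : (i / (n+1) <= m)%nat).
    { apply Nat.lt_succ_r. apply Nat.div_lt_upper_bound; lia. }
    set (j := (i / (n+1))%nat) in *. set (k := (i mod (n+1))%nat) in *.
    assert (Hk : (k <= n)%nat) by lia.
    assert (Hri : r i <= rho) by (apply incr_le; auto).
    assert (Hri' : r i <= r ((n+1)*j+n)%nat) by (apply incr_le; auto; lia).
    destruct (HFY j Hj) as [_ HYd]. destruct (HVF k Hk) as [[Rb [HRb HRbV]] HVd].
    split.
    + exists Rb; split; auto. intros A [U [V [HU [HV ->]]]].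
      destruct (HRbV V HV) as [R' [HR' HR'']]. exists R'; split; auto.
      intros x y [_ [p [Hp Vp]]] [_ [q [Hq Vq]]].
      specialize (HR'' p q Vp Vq). unfold restrict_metric in HR''.
      rewrite Hp, Hq, (dS_linv mul inv e S dS Hg Hw) in HR''. exact HR''.
    + intros A B [U [V [HU [HV ->]]]] [U' [V' [HU' [HV' ->]]]] Hne.
      destruct (classic (U = U')) as [<-|HUU].
      * assert (HVV : V <> V') by (intros <-; apply Hne; reflexivity).
        destruct (HVd V V' HV HV' HVV) as [r' [Hr' Hr'd]].
        exists r'; split; [lra|].
        intros x y [_ [p [Hp Vp]]] [_ [q [Hq Vq]]].
        specialize (Hr'd p q Vp Vq). unfold restrict_metric in Hr'd.
        rewrite Hp, Hq, (dS_linv mul inv e S dS Hg Hw) in Hr'd. exact Hr'd.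
      * destruct (HYd U U' HU HU' HUU) as [s' [Hs' Hs'd]].
        exists (s' / L). split.
        { unfold s in Hs'. apply Rle_lt_trans with (r ((n+1)*j+n)%nat); auto.
          apply Rmult_lt_reg_l with L; auto. replace (L * (s'/L)) with s' by (field; lra). lra. }
        { intros x y [Ux _] [Uy _]. specialize (Hs'd _ _ Ux Uy). pose proof (Hlip x y).
          apply Rmult_le_reg_l with L; auto. replace (L*(s'/L)) with s' by (field; lra). lra. }
  - intros x. destruct (HFYc (act x x0)) as [j [U [Hj [HU Ux]]]].
    pose (p := exist (fun g => quasi_stab act dM D x0 g) (mul (inv (gU U)) x) (HgU j U Hj HU x Ux)).
    destruct (HVFc p) as [k [V [Hk [HV Vp]]]].
    exists ((n+1)*j + k)%nat, (Aset U V). split; [nia|]. split.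
    + exists U, V.
      assert (Hd : (((n+1)*j + k)/(n+1) = j)%nat) by (symmetry; apply Nat.div_unique with k; lia).
      assert (Hmo : (((n+1)*j + k) mod (n+1) = k)%nat) by (symmetry; apply Nat.mod_unique with j; lia).
      rewrite Hd, Hmo. auto.
    + split; auto. exists p; split; auto.
Qed.
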